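(* Let $p$ be an odd prime and let $n,s$ be positive integers such that $2n/s\geq 3$ is an odd integer; put $q=p^n$, $d=p^s$. Fix $\mu\in\mathbb{F}_{q^2}\setminus\mathbb{F}_q$ such that $\mu^d=u_1+u_2\mu$ with $u_1,u_2\in\mathbb{F}_q$ and $u_2$ a $(d-1)$-th power in $\mathbb{F}_{q^2}$, and write $\mu^{d+1}=w_1+w_2\mu$ with $w_1,w_2\in\mathbb{F}_q$. Let \[ J=\{(a^d+a,\,x_1+x_2\mu): a,x_1\in\mathbb{F}_q,\ x_2\in\mathbb{F}_q^*\},\qquad K=\bigcup_{\beta\in\mathbb{F}_q}\phi_{(\beta\mu)^d+\beta\mu}(J). \] If $X=(\mathbb{F}_{q^2}\times\mathbb{F}_{q^2})\setminus K$, then \[ X=\{((a+\beta\mu)^d+(a+\beta\mu),\ t_1+(a^d\beta+a\beta^du_2+\beta^{d+1}w_2)\mu): a,\beta,t_1\in\mathbb{F}_q\}. \]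
   Context: The map $x\mapsto x^d+x$ is a bijection of $\mathbb{F}_{q^2}$. For $k=\alpha^d+\alpha\in\mathbb{F}_{q^2}$ ($\alpha\in\mathbb{F}_{q^2}$), $\phi_k:\mathbb{F}_{q^2}\times\mathbb{F}_{q^2}\to\mathbb{F}_{q^2}\times\mathbb{F}_{q^2}$ is the map $(a^d+a,x)\mapsto(a^d+a+k,\ x+a^d\alpha+a\alpha^d+\alpha^{d+1})$. $\mathbb{F}_q$ is the subfield of $\mathbb{F}_{q^2}$ of order $q$. *)

(* Defs.v *)
From HB Require Import structures.
From mathcomp Require Import all_boot all_order all_algebra all_field.
Set Implicit Arguments. Unset Strict Implicit. Unset Printing Implicit Defensive.
Import GRing.Theory.
Local Open Scope ring_scope.

Definition subFq (F : finFieldType) (q : nat) : {set F} := [set x : F | x ^+ q == x].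

(* The map T(x) = x^d + x, and a chosen preimage (the genuine inverse when T is
   a bijection, which is the case under the hypotheses of lemma10). *)
Definition Tmap (F : finFieldType) (d : nat) (x : F) : F := x ^+ d + x.
Definition Tinv (F : finFieldType) (d : nat) (k : F) : F :=
  odflt 0 [pick y : F | Tmap d y == k].

(* phi_k : (a^d+a, x) |-> (a^d+a+k, x + a^d alpha + a alpha^d + alpha^(d+1)),
   where k = alpha^d + alpha. *)
Definition phi (F : finFieldType) (d : nat) (k : F) (P : F * F) : F * F :=
  let alpha := Tinv d k in
  let a := Tinv d P.1 in
  (P.1 + k, P.2 + a ^+ d * alpha + a * alpha ^+ d + alpha ^+ d.+1).

Definition Jset (F : finFieldType) (q d : nat) (mu : F) : {set F * F} :=
  [set P : F * F | [exists a in subFq F q, exists x1 in subFq F q,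
     exists x2 in subFq F q, (x2 != 0) && (P == (Tmap d a, x1 + x2 * mu))]].

Definition Kset (F : finFieldType) (q d : nat) (mu : F) : {set F * F} :=
  [set P : F * F | [exists beta in subFq F q, exists Q in Jset q d mu,
     P == phi d (Tmap d (beta * mu)) Q]].

(* Main.v *)
Require Import Defs.
From HB Require Import structures.
From mathcomp Require Import all_boot all_order all_algebra all_field.
From mathcomp Require Import ring.
Import GRing.Theory.
Local Open Scope ring_scope.

Section Aux.
Variables (F : finFieldType) (p : nat).
Hypothesis chp : p \in [pchar F].

Lemma pnP k : [pchar F].-nat (p ^ k)%N.
Proof.
rewrite pnatX (eq_pnat _ (pcharf_eq chp)) pnat_id //.
exact: pcharf_prime chp.
Qed.

Lemma addX k (x y : F) : (x + y) ^+ (p ^ k)%N = x ^+ (p ^ k)%N + y ^+ (p ^ k)%N.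
Proof. exact: exprDn_pchar (pnP k). Qed.

Lemma oppX k (x : F) : (- x) ^+ (p ^ k)%N = - x ^+ (p ^ k)%N.
Proof. exact: exprNn_pchar (pnP k). Qed.

Lemma subX k (x y : F) : (x - y) ^+ (p ^ k)%N = x ^+ (p ^ k)%N - y ^+ (p ^ k)%N.
Proof. by rewrite addX oppX. Qed.

Variable n : nat.
Hypothesis card : #|F| = ((p ^ n) ^ 2)%N.

Lemma qq (x : F) : (x ^+ (p ^ n)%N) ^+ (p ^ n)%N = x.
Proof. by rewrite -exprM mulnn -card expf_card. Qed.

Local Notation S := (subFq F (p ^ n)%N).

Lemma SE x : (x \in S) = (x ^+ (p ^ n)%N == x).
Proof. by rewrite /subFq inE. Qed.

Lemma SD x y : x \in S -> y \in S -> x + y \in S.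
Proof. by rewrite !SE addX => /eqP -> /eqP ->. Qed.
Lemma SN x : x \in S -> - x \in S.
Proof. by rewrite !SE oppX => /eqP ->. Qed.
Lemma SB x y : x \in S -> y \in S -> x - y \in S.
Proof. by move=> ? ?; apply: SD => //; apply: SN. Qed.
Lemma SM x y : x \in S -> y \in S -> x * y \in S.
Proof. by rewrite !SE exprMn => /eqP -> /eqP ->. Qed.
Lemma SV x : x \in S -> x^-1 \in S.
Proof. by rewrite !SE exprVn => /eqP ->. Qed.
Lemma SX x k : x \in S -> x ^+ k \in S.
Proof. by rewrite !SE exprAC => /eqP ->. Qed.

Variable mu : F.
Hypothesis muS : mu \notin S.

Lemma uniq_dec a b a' b' : a \in S -> b \in S -> a' \in S -> b' \in S ->
  a + b * mu = a' + b' * mu -> a = a' /\ b = b'.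
Proof.
move=> aS bS a'S b'S E.
have [eb|nb] := eqVneq b b'.
  by subst b'; split => //; move/addIr: E.
exfalso; move/negP: muS; apply.
have -> : mu = (a - a') / (b' - b).
  have nb' : b' - b != 0 by rewrite subr_eq0 eq_sym.
  apply: (mulIf nb'); rewrite divfK //.
  have : a - a' = b' * mu - b * mu.
    by rewrite -[a](addrK (b * mu)) E; ring.
  by move=> ->; ring.
by apply: SM; [apply: SB | apply: SV; apply: SB].
Qed.

Lemma dec z : exists a b, [/\ a \in S, b \in S & z = a + b * mu].
Proof.
set q := (p ^ n)%N%N.
have D : mu - mu ^+ q != 0.
  by rewrite subr_eq0 eq_sym -SE.
set b := (z - z ^+ q) / (mu - mu ^+ q).
have bS : b \in S.
  rewrite SE /b expr_div_n !subX !qq.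
  by rewrite -[z ^+ q - z]opprB -[mu ^+ q - mu]opprB invrN mulrNN.
exists (z - b * mu), b; split => //; last by ring.
rewrite SE subX exprMn.
move: (bS); rewrite SE => /eqP ->.
rewrite /b; move: D; set Z := z ^+ q; set M := mu ^+ q => D.
by apply/eqP; field.
Qed.

End Aux.

Section TT.
Variables (F : finFieldType) (p s n : nat).
Hypothesis chp : p \in [pchar F].
Hypothesis op : odd p.
Hypothesis sdiv : (s %| 2 * n)%N.
Hypothesis modd : odd ((2 * n) %/ s).
Hypothesis card : #|F| = ((p ^ n) ^ 2)%N.

Lemma T0 (x : F) : x ^+ (p ^ s)%N = - x -> x = 0.
Proof.
move=> hx.
have H k : x ^+ ((p ^ s) ^ k)%N = (-1) ^+ k * x.
  elim: k => [|k IH]; first by rewrite expn0 expr1 expr0 mul1r.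
  rewrite expnS exprM hx -expnM oppX // expnM IH exprS mulNr mul1r mulNr.
  done.
have E : x ^+ ((p ^ s) ^ ((2 * n) %/ s))%N = x.
  by rewrite -expnM mulnC divnK // mulnC expnM -card expf_card.
move: E; rewrite H -signr_odd modd expr1 mulN1r => E.
have h2 : 2%:R * x = 0 by rewrite mulr_natl mulr2n -{2}E subrr.
move/eqP: h2; rewrite mulf_eq0 => /orP[|/eqP//].
rewrite -(dvdn_pcharf chp) => /(dvdn_leq (isT : (0 < 2)%N)).
have pr := pcharf_prime chp.
move: pr op; case: (p) => [|[|[|]]] //.
Qed.

Lemma Tadd (x y : F) : Tmap (p ^ s)%N (x + y) = Tmap (p ^ s)%N x + Tmap (p ^ s)%N y.
Proof. by rewrite /Tmap addX //; ring. Qed.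

Lemma Tinj : injective (Tmap (F := F) (p ^ s)%N).
Proof.
move=> x y E; apply/eqP; rewrite -subr_eq0; apply/eqP; apply: T0.
rewrite subX //; move: E; rewrite /Tmap => E.
apply/eqP; rewrite -subr_eq0; apply/eqP.
by rewrite -[x ^+ _](addrK x) E; ring.
Qed.

Lemma TinvK (x : F) : Tinv (p ^ s)%N (Tmap (p ^ s)%N x) = x.
Proof.
rewrite /Tinv; case: pickP => [y /eqP/Tinj -> // | H].
by have := H x; rewrite eqxx.
Qed.

Lemma Tsurj (k : F) : exists x, k = Tmap (p ^ s)%N x.
Proof.
have [g _ gK] := injF_bij Tinj.
by exists (g k); rewrite gK.
Qed.

End TT.

Ltac sS0 h1 h2 h3 h4 h5 :=
  repeat match goal with
  | |- is_true (_ - _ \in _) => apply: (h1 _ _)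
  | |- is_true (_ + _ \in _) => apply: (h2 _ _)
  | |- is_true (_ * _ \in _) => apply: (h3 _ _)
  | |- is_true (_ ^+ _ \in _) => apply: (h4 _ _)
  | |- is_true (?c _ _ \in _) => apply: (h5 _ _)
  | H : is_true (?x \in _) |- is_true (?x \in _) => exact: H
  end.

Theorem lemma10 (F : finFieldType) (p n s : nat) (mu u1 u2 w1 w2 : F) :
  prime p -> odd p -> p \in [pchar F] ->
  (0 < n)%N -> (0 < s)%N ->
  (s %| 2 * n)%N -> odd ((2 * n) %/ s) -> (3 <= (2 * n) %/ s)%N ->
  #|F| = ((p ^ n) ^ 2)%N ->
  mu \notin subFq F (p ^ n) ->
  u1 \in subFq F (p ^ n) -> u2 \in subFq F (p ^ n) ->
  mu ^+ (p ^ s) = u1 + u2 * mu ->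
  (exists v : F, u2 = v ^+ (p ^ s).-1) ->
  w1 \in subFq F (p ^ n) -> w2 \in subFq F (p ^ n) ->
  mu ^+ (p ^ s).+1 = w1 + w2 * mu ->
  ~: Kset (p ^ n) (p ^ s) mu =
  [set P : F * F | [exists a in subFq F (p ^ n), exists beta in subFq F (p ^ n),
     exists t1 in subFq F (p ^ n),
     P == (Tmap (p ^ s) (a + beta * mu),
           t1 + (a ^+ (p ^ s) * beta + a * beta ^+ (p ^ s) * u2
                 + beta ^+ (p ^ s).+1 * w2) * mu)]].
Proof.
move=> pr op chp n0 s0 sdiv modd m3 card muS u1S u2S hmu _ w1S w2S hw.
have SD' := @SD F p chp n. have SM' := @SM F p n.
have SB' := @SB F p chp n. have SX' := @SX F p n.
have TK := @TinvK F p s n chp op sdiv modd card.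
have Ti := @Tinj F p s n chp op sdiv modd card.
have Ta := @Tadd F p s chp.
have UD := @uniq_dec F p chp n mu muS.
have DC := @dec F p chp n card mu muS.
pose c (a b : F) := a ^+ (p ^ s) * b + a * b ^+ (p ^ s) * u2 + b ^+ (p ^ s).+1 * w2.
have cS a b : a \in subFq F (p ^ n) -> b \in subFq F (p ^ n) -> c a b \in subFq F (p ^ n).
  move=> aS bS; rewrite /c.
  repeat match goal with
  | |- is_true (_ + _ \in _) => apply: (SD' _ _)
  | |- is_true (_ * _ \in _) => apply: (SM' _ _)
  | |- is_true (_ ^+ _ \in _) => apply: (SX' _ _)
  | H : is_true (?x \in _) |- is_true (?x \in _) => exact: H
  end.
have PH (a b x1 x2 : F) : phi (p ^ s) (Tmap (p ^ s) (b * mu)) (Tmap (p ^ s) a, x1 + x2 * mu)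
   = (Tmap (p ^ s) (a + b * mu),
      (x1 + a * b ^+ (p ^ s) * u1 + b ^+ (p ^ s).+1 * w1) + (x2 + c a b) * mu).
  rewrite /phi /= !TK Ta; congr pair.
  rewrite /c !exprMn hmu hw; ring.
apply/setP => -[z1 z2]; rewrite in_setC.
have [x ->] := @Tsurj F p s n chp op sdiv modd card z1.
have [a [b [aS bS ->]]] := DC x.
have [y1 [y2 [y1S y2S ->]]] := DC z2.
have HK : ((Tmap (p ^ s) (a + b * mu), y1 + y2 * mu) \in Kset (p ^ n) (p ^ s) mu)
          = (y2 != c a b).
  apply/idP/idP.
  - rewrite inE => /existsP[b' /andP[b'S /existsP[Q /andP[]]]].
    rewrite inE => /existsP[a' /andP[a'S /existsP[x1 /andP[x1S
       /existsP[x2 /andP[x2S /andP[x2n /eqP ->]]]]]]].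
    rewrite PH xpair_eqE => /andP[/eqP E1 /eqP E2].
    have {}E1 := Ti _ _ E1.
    have [ea eb] := UD _ _ _ _ aS bS a'S b'S E1.
    subst a' b'.
    have X1S : x1 + a * b ^+ (p ^ s) * u1 + b ^+ (p ^ s).+1 * w1 \in subFq F (p ^ n).
      by sS0 SB' SD' SM' SX' cS.
    have X2S : x2 + c a b \in subFq F (p ^ n) by sS0 SB' SD' SM' SX' cS.
    have [_ ->] := UD _ _ _ _ y1S y2S X1S X2S E2.
    by rewrite -subr_eq0 addrK.
  - move=> ne; rewrite inE; apply/existsP; exists b; rewrite bS /=.
    apply/existsP; exists (Tmap (p ^ s) a,
      (y1 - a * b ^+ (p ^ s) * u1 - b ^+ (p ^ s).+1 * w1) + (y2 - c a b) * mu).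
    apply/andP; split.
      rewrite inE; apply/existsP; exists a; rewrite aS /=.
      apply/existsP; exists (y1 - a * b ^+ (p ^ s) * u1 - b ^+ (p ^ s).+1 * w1).
      apply/andP; split; first by sS0 SB' SD' SM' SX' cS.
      apply/existsP; exists (y2 - c a b); apply/andP; split; first by sS0 SB' SD' SM' SX' cS.
      by rewrite subr_eq0 ne /=.
    rewrite PH; apply/eqP; congr pair; ring.
rewrite HK negbK inE; apply/idP/idP.
- move/eqP => ->; apply/existsP; exists a; rewrite aS /=.
  apply/existsP; exists b; rewrite bS /=.
  by apply/existsP; exists y1; rewrite y1S /=.
- move=> /existsP[a' /andP[a'S /existsP[b' /andP[b'S
     /existsP[t1 /andP[t1S]]]]]].
  rewrite xpair_eqE => /andP[/eqP E1 /eqP E2].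
  have {}E1 := Ti _ _ E1.
  have [ea eb] := UD _ _ _ _ aS bS a'S b'S E1.
  subst a' b'.
  have [_ ->] := UD _ _ _ _ y1S y2S t1S (cS a b aS bS) E2.
  by [].
Qed.
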